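(* Let $S_1>0$ and $t>1$, and set $f(S_1)=(t-1)\big(1+(t+1)S_1\big)$. With $R_{DF},R_{CF}$ as defined in the context, for every $S_2\ge 0$: if $S_2>f(S_1)$ then $R_{CF}(S_2)>R_{DF}(S_2)$, and if $S_2\le f(S_1)$ then $R_{DF}(S_2)\ge R_{CF}(S_2)$. Consequently $\max\{R_{DF}(S_2),R_{CF}(S_2)\}$ equals $R_{DF}(S_2)$ for $S_2\le f(S_1)$ and $R_{CF}(S_2)$ for $S_2>f(S_1)$.
   Context: $C(x)=\log_2(1+x)$. For fixed $S_1>0$, $t>0$ and $S_2\ge0$, $$R_{DF}(S_2)=\frac12\max_{0\le\rho\le1}\min\Big\{C(tS_1)+C\big((1-\rho^2)S_1\big),\;C(S_1)+C\big(S_1+S_2+2\rho\sqrt{S_1S_2}\big)\Big\},$$ $$R_{CF}(S_2)=\frac12C(S_1)+\frac12C\Big(S_1+\frac{tS_1S_2}{1+(t+1)S_1+S_2}\Big).$$ These are the DF and CF rates of a half-duplex Gaussian relay channel with source–destination SNR $S_1$, source–relay/source–destination gain ratio $t$, and relay–destination SNR $S_2$. *)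

(* Defs.v *)
From Stdlib Require Import Reals Lra Classical ClassicalEpsilon.
Open Scope R_scope.

Definition Cap (x : R) : R := ln (1 + x) / ln 2.

Definition DF_obj (S1 t S2 rho : R) : R :=
  Rmin (Cap (t * S1) + Cap ((1 - rho ^ 2) * S1))
       (Cap S1 + Cap (S1 + S2 + 2 * rho * sqrt (S1 * S2))).

Definition is_max_DF (S1 t S2 r : R) : Prop :=
  (exists rho, 0 <= rho <= 1 /\ DF_obj S1 t S2 rho = r) /\
  (forall rho, 0 <= rho <= 1 -> DF_obj S1 t S2 rho <= r).

(* max_{0<=rho<=1} DF_obj, chosen by Hilbert's epsilon (the maximum exists
   since DF_obj is continuous in rho on the compact interval [0,1]). *)
Definition max_DF (S1 t S2 : R) : R :=
  epsilon (inhabits 0) (fun r => is_max_DF S1 t S2 r).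

Definition R_DF (S1 t S2 : R) : R := / 2 * max_DF S1 t S2.

Definition R_CF (S1 t S2 : R) : R :=
  / 2 * Cap S1 + / 2 * Cap (S1 + t * S1 * S2 / (1 + (t + 1) * S1 + S2)).

Definition f_thr (S1 t : R) : R := (t - 1) * (1 + (t + 1) * S1).

(* Main.v *)
Require Import Defs.
From Stdlib Require Import Reals Lra Classical ClassicalEpsilon.
From Coquelicot Require Import Coquelicot.
Open Scope R_scope.

Lemma Rmin_abs (a b : R) : Rmin a b = (a + b - Rabs (a - b)) / 2.
Proof.
  unfold Rmin; destruct (Rle_dec a b).
  - rewrite Rabs_left1; lra.
  - rewrite Rabs_right; lra.
Qed.

Lemma cont_Rmin (f g : R -> R) (x : R) :
  continuity_pt f x -> continuity_pt g x ->
  continuity_pt (fun y => Rmin (f y) (g y)) x.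
Proof.
  intros Hf Hg.
  apply continuity_pt_ext with
    (f := fun y => (f y + g y - Rabs (f y - g y)) * / 2).
  { intros y; rewrite Rmin_abs; unfold Rdiv; reflexivity. }
  apply (continuity_pt_mult (fun y => f y + g y - Rabs (f y - g y)) (fun _ => / 2)).
  2: { apply continuity_pt_const; intros a b; reflexivity. }
  apply (continuity_pt_minus (fun y => f y + g y) (fun y => Rabs (f y - g y))).
  - apply (continuity_pt_plus f g); assumption.
  - apply (continuity_pt_comp (fun y => f y - g y) Rabs).
    + apply (continuity_pt_minus f g); assumption.
    + apply Rcontinuity_abs.
Qed.

Lemma cont_of_der (f : R -> R) (x : R) : ex_derive f x -> continuity_pt f x.
Proof. intros H. apply continuity_pt_filterlim. apply (ex_derive_continuous f x H). Qed.

Lemma ln2_pos : 0 < ln 2.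
Proof. pose proof ln_lt_2; lra. Qed.

Lemma Cap_le (a b : R) : -1 < a -> a <= b -> Cap a <= Cap b.
Proof.
  intros Ha Hab; unfold Cap, Rdiv.
  apply Rmult_le_compat_r; [left; apply Rinv_0_lt_compat, ln2_pos|].
  destruct Hab as [H|H]; [left; apply ln_increasing; lra | subst; lra].
Qed.

Lemma Cap_lt (a b : R) : -1 < a -> a < b -> Cap a < Cap b.
Proof.
  intros Ha Hab; unfold Cap, Rdiv.
  apply Rmult_lt_compat_r; [apply Rinv_0_lt_compat, ln2_pos|].
  apply ln_increasing; lra.
Qed.

Lemma max_exists (S1 t S2 : R) : 0 < S1 -> 0 < t -> 0 <= S2 ->
  exists r, is_max_DF S1 t S2 r.
Proof.
  intros hS1 ht hS2.
  set (q := sqrt (S1 * S2)).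
  assert (hq : 0 <= q) by apply sqrt_pos.
  destruct (continuity_ab_maj (DF_obj S1 t S2) 0 1) as [M [HM HMr]].
  - lra.
  - intros c Hc. unfold DF_obj. fold q.
    apply (cont_Rmin
      (fun rho => Cap (t * S1) + Cap ((1 - rho ^ 2) * S1))
      (fun rho => Cap S1 + Cap (S1 + S2 + 2 * rho * q))).
    + apply cont_of_der. unfold Cap.
      auto_derive. assert (0 <= c^2 <= 1) by (split; nra). nra.
    + apply cont_of_der. unfold Cap.
      auto_derive. nra.
  - exists (DF_obj S1 t S2 M). split; [exists M; split; auto | exact HM].
Qed.

Lemma max_DF_spec (S1 t S2 : R) : 0 < S1 -> 0 < t -> 0 <= S2 ->
  is_max_DF S1 t S2 (max_DF S1 t S2).
Proof.
  intros; unfold max_DF. apply epsilon_spec. apply max_exists; auto.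
Qed.

Theorem mainTheorem3 (S1 t : R) (hS1 : 0 < S1) (ht : 1 < t) :
  forall S2 : R, 0 <= S2 ->
    (S2 > f_thr S1 t -> R_CF S1 t S2 > R_DF S1 t S2) /\
    (S2 <= f_thr S1 t -> R_DF S1 t S2 >= R_CF S1 t S2) /\
    (S2 <= f_thr S1 t -> Rmax (R_DF S1 t S2) (R_CF S1 t S2) = R_DF S1 t S2) /\
    (S2 > f_thr S1 t -> Rmax (R_DF S1 t S2) (R_CF S1 t S2) = R_CF S1 t S2).
Proof.
  intros S2 hS2.
  destruct (max_DF_spec S1 t S2 hS1 ltac:(lra) hS2) as [[rho [Hr Hrv]] Hub].
  set (D := 1 + (t + 1) * S1 + S2).
  assert (hD : 0 < D) by (unfold D; nra).
  set (x := S1 + t * S1 * S2 / D).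
  assert (hx0 : 0 <= t * S1 * S2 / D).
  { unfold Rdiv; apply Rmult_le_pos; [apply Rmult_le_pos; [apply Rmult_le_pos|]; lra | left; apply Rinv_0_lt_compat; lra]. }
  assert (hxS : S1 <= x) by (unfold x; lra).
  assert (Hkey : t * S1 - x = S1 * (f_thr S1 t - S2) / D).
  { replace (f_thr S1 t - S2) with ((t-1)*D - t*S2) by (unfold f_thr, D; ring).
    unfold x; field; lra. }
  assert (HB : x <= S1 + S2).
  { assert (S1 + S2 - x = S2 * (1 + S1 + S2) / D) as E.
    { replace (1 + S1 + S2) with (D - t * S1) by (unfold D; ring).
      unfold x; field; lra. }
    assert (0 <= S2 * (1 + S1 + S2) / D).
    { unfold Rdiv; apply Rmult_le_pos; [nra | left; apply Rinv_0_lt_compat; lra]. }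
    lra. }
  assert (HCF : R_CF S1 t S2 = / 2 * (Cap S1 + Cap x)) by (unfold R_CF, x, D; ring).
  assert (Part1 : S2 > f_thr S1 t -> R_CF S1 t S2 > R_DF S1 t S2).
  { intros Hf.
    assert (Hlt : t * S1 < x).
    { assert (S1 * (f_thr S1 t - S2) < 0) by nra.
      assert (0 < / D) by (apply Rinv_0_lt_compat; lra).
      assert (S1 * (f_thr S1 t - S2) / D < 0) by (unfold Rdiv; nra). lra. }
    rewrite HCF. unfold R_DF. rewrite <- Hrv. unfold DF_obj.
    pose proof (Rmin_l (Cap (t * S1) + Cap ((1 - rho ^ 2) * S1))
       (Cap S1 + Cap (S1 + S2 + 2 * rho * sqrt (S1 * S2)))).
    assert (Cap ((1 - rho ^ 2) * S1) <= Cap S1).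
    { apply Cap_le; [|]; assert (0 <= rho^2 <= 1) by (split; nra); nra. }
    assert (Cap (t * S1) < Cap x) by (apply Cap_lt; [assert (0 < t*S1) by (apply Rmult_lt_0_compat; lra); lra | exact Hlt]).
    lra. }
  assert (Part2 : S2 <= f_thr S1 t -> R_DF S1 t S2 >= R_CF S1 t S2).
  { intros Hf.
    assert (Hle : x <= t * S1).
    { assert (0 <= S1 * (f_thr S1 t - S2)) by nra.
      assert (0 < / D) by (apply Rinv_0_lt_compat; lra).
      assert (0 <= S1 * (f_thr S1 t - S2) / D) by (unfold Rdiv; nra). lra. }
    rewrite HCF. unfold R_DF.
    assert (H0 := Hub 0 ltac:(lra)). unfold DF_obj in H0.
    replace ((1 - 0 ^ 2) * S1) with S1 in H0 by ring.
    replace (S1 + S2 + 2 * 0 * sqrt (S1 * S2)) with (S1 + S2) in H0 by ring.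
    assert (Cap x <= Cap (t * S1)) by (apply Cap_le; lra).
    assert (Cap x <= Cap (S1 + S2)) by (apply Cap_le; lra).
    assert (Cap S1 + Cap x <= Rmin (Cap (t * S1) + Cap S1) (Cap S1 + Cap (S1 + S2))).
    { apply Rmin_glb; lra. }
    lra. }
  split; [exact Part1|]. split; [exact Part2|]. split.
  - intros Hf. apply Rmax_left. pose proof (Part2 Hf); lra.
  - intros Hf. apply Rmax_right. pose proof (Part1 Hf); lra.
Qed.
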